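(* Fix $i\in\{1,\dots,\underline m\}$. Suppose $(A,B,K,\underline b,d,\underline D_{[i]},W_{[i]})$ with $\underline D_{[i]}\in\mathbb{D}_+^{\underline m}$, $W_{[i]}\in\mathbb{D}_+^{m_w}$ satisfies condition (RPI$_i$). Consider the LMI in the variables $(\mathbf A,\mathbf B,\mathbf d,\mathbf K,\underline{\mathbf b},\hat{\underline{\mathbf D}}_{[i]},\hat{\mathbf W}_{[i]})$: $$\begin{bmatrix} \mathbf I & \mathbf 0 & \mathbf 0 & -\mathbf B^\top\underline P_i^\top & \mathbf 0 & \mathbf K\\ * & \hat{\underline{\mathbf D}}_{[i]} & \mathbf 0 & \underline{\mathbf b} & \mathbf 0 & \mathbf 0\\ * & * & \hat{\mathbf W}_{[i]} & \mathbf d & \mathbf 0 & \mathbf 0\\ * & * & * & 2\underline{\mathbf b}_i+\mathcal{L}^{B^\top\underline P_i^\top,\mathbf I}_{\mathbf B^\top\underline P_i^\top,\mathbf I} & \underline P_i & \underline P_i\mathbf A\\ * & * & * & * & \mathcal{L}^{F,W_{[i]}^{-1}}_{F,\hat{\mathbf W}_{[i]}} & \mathbf 0\\ * & * & * & * & * & \mathcal{L}^{\underline P,\underline D_{[i]}^{-1}}_{\underline P,\hat{\underline{\mathbf D}}_{[i]}}+\mathcal{L}^{K,\mathbf I}_{\mathbf K,\mathbf I} \end{bmatrix}\succ0 .$$ Then (a) this LMI is satisfied by $(\mathbf A,\mathbf B,\mathbf d,\mathbf K,\underline{\mathbf b},\hat{\underline{\mathbf D}}_{[i]},\hat{\mathbf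 W}_{[i]})=(A,B,d,K,\underline b,\underline D_{[i]}^{-1},W_{[i]}^{-1})$; and (b) any solution with $\hat{\underline{\mathbf D}}_{[i]}\in\mathbb{D}_+^{\underline m}$, $\hat{\mathbf W}_{[i]}\in\mathbb{D}_+^{m_w}$ is such that $(\mathbf A,\mathbf B,\mathbf K,\underline{\mathbf b},\mathbf d,\hat{\underline{\mathbf D}}_{[i]}^{-1},\hat{\mathbf W}_{[i]}^{-1})$ satisfies condition (RPI$_i$).
   Context: Notation: $M_i$ is the $i$-th row of a matrix $M$, $b_i$ the $i$-th entry of a vector $b$; $\mathbb{D}_+^m$ is the set of $m\times m$ diagonal matrices with positive diagonal; $\succ0$ means symmetric positive definite; $*$ denotes symmetric blocks; $\mathbf I,\mathbf 0$ identity and zero blocks of appropriate size (the first diagonal $\mathbf I$ is $n_u\times n_u$). For matrices $\mathbf L,L\in\mathbb{R}^{m\times n}$ and symmetric invertible $\mathbf D,D\in\mathbb{R}^{m\times m}$, $\mathcal{L}^{L,D}_{\mathbf L,\mathbf D}:=\mathbf L^\top D^{-1}L+L^\top D^{-1}\mathbf L-L^\top D^{-1}\mathbf D D^{-1}L$. Fixed data: $\underline P\in\mathbb{R}^{\underline m\times n_x}$, $F\in\mathbb{R}^{m_w\times n_x}$. Variables: $A\in\mathbb{R}^{n_x\times n_x}$, $B\in\mathbb{R}^{n_x\times n_u}$, $K\in\mathbb{R}^{n_u\times n_x}$, $\underline b\in\mathbb{R}^{\underline m}$, $d\in\mathbb{R}^{m_w}$ (bold versions of the same sizes). Condition (RPI$_i$)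 for $(A,B,K,\underline b,d,\underline D_{[i]},W_{[i]})$: $$\begin{bmatrix}2\underline b_i-\underline b^\top\underline D_{[i]}\underline b-d^\top W_{[i]}d & \underline P_i & \underline P_i(A+BK)\\ * & F^\top W_{[i]}F & \mathbf 0\\ * & * & \underline P^\top\underline D_{[i]}\underline P\end{bmatrix}\succ0.$$ *)

(* Defs.v *)
From HB Require Import structures.
From mathcomp Require Import all_boot all_order all_algebra.
Set Implicit Arguments. Unset Strict Implicit. Unset Printing Implicit Defensive.
Import Order.TTheory GRing.Theory Num.Theory.
Local Open Scope ring_scope.

Definition posdef (R : realFieldType) (n : nat) (M : 'M[R]_n) : Prop :=
  M^T = M /\ forall x : 'cV[R]_n, x != 0 -> 0 < (x^T *m M *m x) 0 0.

Definition diagpos (R : realFieldType) (n : nat) (D : 'M[R]_n) : Prop :=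
  is_diag_mx D /\ forall j : 'I_n, 0 < D j j.

Definition Lop (R : realFieldType) (m n : nat)
    (L : 'M[R]_(m, n)) (D : 'M[R]_m) (bL : 'M[R]_(m, n)) (bD : 'M[R]_m) : 'M[R]_n :=
  bL^T *m invmx D *m L + L^T *m invmx D *m bL
  - L^T *m invmx D *m bD *m invmx D *m L.

Definition RPI (R : realFieldType) (nx nu m mw : nat)
    (P : 'M[R]_(m, nx)) (F : 'M[R]_(mw, nx)) (i : 'I_m)
    (A : 'M[R]_nx) (B : 'M[R]_(nx, nu)) (K : 'M[R]_(nu, nx))
    (b : 'cV[R]_m) (d : 'cV[R]_mw) (D : 'M[R]_m) (W : 'M[R]_mw) : Prop :=
  let Pi := row i P in
  let s : 'M[R]_1 := (2 * b i 0)%:M - b^T *m D *m b - d^T *m W *m d in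
  let r1 : 'M[R]_(1, nx + nx) := row_mx Pi (Pi *m (A + B *m K)) in
  let M23 : 'M[R]_(nx + nx) := block_mx (F^T *m W *m F) 0 0 (P^T *m D *m P) in
  posdef (block_mx s r1 r1^T M23).

Definition LMI3 (R : realFieldType) (nx nu m mw : nat)
    (P : 'M[R]_(m, nx)) (F : 'M[R]_(mw, nx)) (i : 'I_m)
    (B : 'M[R]_(nx, nu)) (K : 'M[R]_(nu, nx)) (D : 'M[R]_m) (W : 'M[R]_mw)
    (bA : 'M[R]_nx) (bB : 'M[R]_(nx, nu)) (bd : 'cV[R]_mw) (bK : 'M[R]_(nu, nx))
    (bb : 'cV[R]_m) (Dh : 'M[R]_m) (Wh : 'M[R]_mw) : Prop :=
  let Pi := row i P in
  let I_u : 'M[R]_nu := 1%:M in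
  (* rows 5-6 *)
  let M6 : 'M[R]_nx := Lop P (invmx D) P Dh + Lop K I_u bK I_u in
  let M5 : 'M[R]_nx := Lop F (invmx W) F Wh in
  let M56 : 'M[R]_(nx + nx) := block_mx M5 0 0 M6 in
  (* row 4 *)
  let s4 : 'M[R]_1 := (2 * bb i 0)%:M
                      + Lop (B^T *m Pi^T) I_u (bB^T *m Pi^T) I_u in
  let r4 : 'M[R]_(1, nx + nx) := row_mx Pi (Pi *m bA) in
  let M4 : 'M[R]_(1 + (nx + nx)) := block_mx s4 r4 r4^T M56 in
  (* row 3 *)
  let r3 : 'M[R]_(mw, 1 + (nx + nx)) := row_mx bd (row_mx 0 0) in
  let M3 : 'M[R]_(mw + (1 + (nx + nx))) := block_mx Wh r3 r3^T M4 in
  (* row 2 *)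
  let r2 : 'M[R]_(m, mw + (1 + (nx + nx))) := row_mx 0 (row_mx bb (row_mx 0 0)) in
  let M2 : 'M[R]_(m + (mw + (1 + (nx + nx)))) := block_mx Dh r2 r2^T M3 in
  (* row 1 *)
  let r1 : 'M[R]_(nu, m + (mw + (1 + (nx + nx)))) :=
    row_mx 0 (row_mx 0 (row_mx (- (bB^T *m Pi^T)) (row_mx 0 bK))) in
  posdef (block_mx I_u r1 r1^T M2).

(* Main.v *)
Require Import Defs.
From HB Require Import structures.
From mathcomp Require Import all_boot all_order all_algebra.
From mathcomp Require Import ring lra.
Import Order.TTheory GRing.Theory Num.Theory.
Local Open Scope ring_scope.

Set Implicit Arguments. Unset Strict Implicit. Unset Printing Implicit Defensive.
Section H.
Variable R : realFieldType.

Definition Bl a b (u : 'cV[R]_a) (M : 'M[R]_(a,b)) (v : 'cV[R]_b) : R :=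
  (u^T *m M *m v) 0 0.
Definition Q a (M : 'M[R]_a) (x : 'cV[R]_a) : R := Bl x M x.
Definition dot a (u v : 'cV[R]_a) : R := (u^T *m v) 0 0.

Lemma mxDE p q (A B : 'M[R]_(p,q)) i j : (A + B) i j = A i j + B i j.
Proof. by rewrite mxE. Qed.
Lemma mxNE p q (A : 'M[R]_(p,q)) i j : (- A) i j = - A i j.
Proof. by rewrite mxE. Qed.
Lemma mxBE p q (A B : 'M[R]_(p,q)) i j : (A - B) i j = A i j - B i j.
Proof. by rewrite !mxE. Qed.

Lemma tr11 (s : 'M[R]_1) : s^T = s.
Proof. by apply/matrixP => i j; rewrite !ord1 mxE. Qed.

Lemma Bl_tr a b (u : 'cV[R]_a) (M : 'M[R]_(a,b)) v : Bl v M^T u = Bl u M v.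
Proof.
rewrite /Bl; have ->: v^T *m M^T *m u = (u^T *m M *m v)^T.
  by rewrite !trmx_mul trmxK mulmxA.
by rewrite tr11.
Qed.

Lemma QB a b (A : 'M[R]_a) (M : 'M[R]_(a,b)) (Dm : 'M[R]_b) u v :
  Q (block_mx A M M^T Dm) (col_mx u v) = Q A u + 2 * Bl u M v + Q Dm v.
Proof.
rewrite /Q /Bl tr_col_mx mul_row_block mul_row_col !mulmxDl !mxDE.
have := Bl_tr u M v; rewrite /Bl => ->. ring.
Qed.

Lemma QB0 a b (A : 'M[R]_a) (Dm : 'M[R]_b) u v :
  Q (block_mx A 0 0 Dm) (col_mx u v) = Q A u + Q Dm v.
Proof.
rewrite /Q /Bl tr_col_mx mul_row_block mul_row_col !mulmxDl !mulmx0 !mul0mx.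
by rewrite !addr0 add0r !mxDE.
Qed.

Lemma Bl_row a b1 b2 (u : 'cV[R]_a) (M1 : 'M[R]_(a,b1)) (M2 : 'M[R]_(a,b2)) v1 v2 :
  Bl u (row_mx M1 M2) (col_mx v1 v2) = Bl u M1 v1 + Bl u M2 v2.
Proof. by rewrite /Bl mul_mx_row mul_row_col mxDE. Qed.

Lemma Bl0 a b (u : 'cV[R]_a) (v : 'cV[R]_b) : Bl u 0 v = 0.
Proof. by rewrite /Bl mulmx0 mul0mx mxE. Qed.

Lemma BlD a b (u : 'cV[R]_a) (M N : 'M[R]_(a,b)) v : Bl u (M + N) v = Bl u M v + Bl u N v.
Proof. by rewrite /Bl mulmxDr mulmxDl mxDE. Qed.
Lemma BlB a b (u : 'cV[R]_a) (M N : 'M[R]_(a,b)) v : Bl u (M - N) v = Bl u M v - Bl u N v.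
Proof. by rewrite /Bl mulmxBr mulmxBl mxBE. Qed.
Lemma BlN a b (u : 'cV[R]_a) (M : 'M[R]_(a,b)) v : Bl u (- M) v = - Bl u M v.
Proof. by rewrite /Bl mulmxN mulNmx mxNE. Qed.

Lemma BlE a b (u : 'cV[R]_a) (M : 'M[R]_(a,b)) v : Bl u M v = dot u (M *m v).
Proof. by rewrite /Bl /dot mulmxA. Qed.
Lemma BlE' a b (u : 'cV[R]_a) (M : 'M[R]_(a,b)) v : Bl u M v = dot (M^T *m u) v.
Proof. by rewrite /Bl /dot trmx_mul trmxK. Qed.

Lemma dotC a (u v : 'cV[R]_a) : dot u v = dot v u.
Proof. by rewrite /dot -[in RHS](tr11 (v^T *m u)) trmx_mul trmxK. Qed.
Lemma dotDl a (u v w : 'cV[R]_a) : dot (u + v) w = dot u w + dot v w.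
Proof. by rewrite /dot linearD /= mulmxDl mxDE. Qed.
Lemma dotBl a (u v w : 'cV[R]_a) : dot (u - v) w = dot u w - dot v w.
Proof. by rewrite /dot linearB /= mulmxBl mxBE. Qed.
Lemma dotNl a (u w : 'cV[R]_a) : dot (- u) w = - dot u w.
Proof. by rewrite /dot linearN /= mulNmx mxNE. Qed.
Lemma dotDr a (u v w : 'cV[R]_a) : dot w (u + v) = dot w u + dot w v.
Proof. by rewrite /dot mulmxDr mxDE. Qed.
Lemma dotBr a (u v w : 'cV[R]_a) : dot w (u - v) = dot w u - dot w v.
Proof. by rewrite /dot mulmxBr mxBE. Qed.
Lemma dotNr a (u w : 'cV[R]_a) : dot w (- u) = - dot w u.
Proof. by rewrite /dot mulmxN mxNE. Qed.

Lemma QD a (M N : 'M[R]_a) x : Q (M + N) x = Q M x + Q N x.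
Proof. exact: BlD. Qed.
Lemma QBm a (M N : 'M[R]_a) x : Q (M - N) x = Q M x - Q N x.
Proof. exact: BlB. Qed.


Lemma Bl_diag a (u : 'cV[R]_a) w v : Bl u (diag_mx w) v = \sum_j u j 0 * w 0 j * v j 0.
Proof. by rewrite /Bl mul_mx_diag !mxE; apply eq_bigr => j _; rewrite !mxE. Qed.

Lemma diagposE a (D : 'M[R]_a) : diagpos D -> exists2 dv, D = diag_mx dv & forall j, 0 < dv 0 j.
Proof.
case=> /is_diag_mxP Hd Hp; exists (\row_j D j j); last by move=> j; rewrite mxE.
apply/matrixP => p q; rewrite !mxE; case: (eqVneq p q) => [->|npq]; first by rewrite mulr1n.
by rewrite mulr0n Hd.
Qed.

Lemma inv_diag a (dv : 'rV[R]_a) : (forall j, 0 < dv 0 j) ->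
  diag_mx dv \in unitmx /\ invmx (diag_mx dv) = diag_mx (\row_j (dv 0 j)^-1).
Proof.
move=> hp.
have H1 : diag_mx dv *m diag_mx (\row_j (dv 0 j)^-1) = 1%:M.
  rewrite mulmx_diag -diag_const_mx; congr diag_mx; apply/matrixP => p q.
  by rewrite !ord1 !mxE divff // lt0r_neq0.
have [hu _] := mulmx1_unit H1; split => //.
by rewrite -[invmx _]mulmx1 -H1 mulmxA mulVmx // mul1mx.
Qed.

Lemma diagpos_unit a (D : 'M[R]_a) : diagpos D -> D \in unitmx.
Proof. by move=> /diagposE [dv -> hp]; case: (inv_diag hp). Qed.

Lemma diagpos_inv a (D : 'M[R]_a) : diagpos D -> diagpos (invmx D).
Proof.
move=> /diagposE [dv -> hp]; have [_ ->] := inv_diag hp.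
split; first exact: diag_mx_is_diag.
by move=> j; rewrite !mxE eqxx mulr1n invr_gt0.
Qed.

Lemma diagpos_sym a (D : 'M[R]_a) : diagpos D -> D^T = D.
Proof. by move=> /diagposE [dv -> hp]; rewrite tr_diag_mx. Qed.

Lemma diagpos1 a : diagpos (1%:M : 'M[R]_a).
Proof.
split; first by rewrite -diag_const_mx diag_mx_is_diag.
by move=> j; rewrite mxE eqxx mulr1n ltr01.
Qed.

Lemma Q_ge0 a (D : 'M[R]_a) e : diagpos D -> 0 <= Q D e.
Proof.
move=> /diagposE [dv -> hp]; rewrite /Q Bl_diag; apply: sumr_ge0 => j _.
have := hp j; move: (dv 0 j) (e j 0) => y z hy; nra.
Qed.

Lemma Q_gt0 a (D : 'M[R]_a) e : diagpos D -> e != 0 -> 0 < Q D e.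
Proof.
move=> hD he; rewrite lt_def Q_ge0 // andbT; apply/eqP => h0.
move: hD h0 => /diagposE [dv -> hp]; rewrite /Q Bl_diag => h0.
have hnn : forall j : 'I_a, true -> 0 <= e j 0 * dv 0 j * e j 0.
  by move=> j _; have := hp j; move: (dv 0 j) (e j 0) => y z hy; nra.
have h1 := psumr_eq0P hnn h0.
move/eqP: he; apply; apply/matrixP => p q; rewrite ord1 mxE.
have := h1 p isT; have := hp p; move: (dv 0 p) (e p 0) => y z hy.
move/eqP; rewrite mulrAC mulf_eq0 (gt_eqF hy) orbF mulf_eq0 orbb => /eqP //.
Qed.

Lemma Lop_eq n p (L : 'M[R]_(n,p)) D : D \in unitmx -> Lop L D L D = L^T *m invmx D *m L.
Proof.
move=> hu; rewrite /Lop.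
have -> : L^T *m invmx D *m D *m invmx D *m L = L^T *m invmx D *m L.
  by rewrite -(mulmxA _ (invmx D) D) mulVmx // mulmx1.
by rewrite addrK.
Qed.

Lemma sc (a c e h : R) : 0 < e -> 0 < h ->
  c * e^-1 * a + a * e^-1 * c - a * (e^-1 * h * e^-1) * a <= c * h^-1 * c.
Proof.
move=> he hh; rewrite -subr_ge0.
have -> : c * h^-1 * c - (c * e^-1 * a + a * e^-1 * c - a * (e^-1 * h * e^-1) * a)
  = h^-1 * (c - h * e^-1 * a) ^+ 2.
  by field; rewrite !lt0r_neq0.
by apply: mulr_ge0; [rewrite ltW // invr_gt0 | apply: sqr_ge0].
Qed.

Lemma Lop_le n p (L bL : 'M[R]_(n,p)) D bD x : diagpos D -> diagpos bD ->
  Q (Lop L D bL bD) x <= Q (bL^T *m invmx bD *m bL) x.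
Proof.
move=> /diagposE [dv -> hd] /diagposE [hv -> hh].
rewrite /Lop QBm QD.
have E1 : forall (X Y : 'M[R]_(n,p)) (M : 'M[R]_n), Q (X^T *m M *m Y) x = Bl (X *m x) M (Y *m x).
  by move=> X Y M; rewrite /Q /Bl trmx_mul !mulmxA.
have E2 : forall (M : 'M[R]_n), Q (L^T *m invmx (diag_mx dv) *m M *m invmx (diag_mx dv) *m L) x
   = Bl (L *m x) (invmx (diag_mx dv) *m M *m invmx (diag_mx dv)) (L *m x).
  by move=> M; rewrite /Q /Bl trmx_mul !mulmxA.
rewrite E2 !E1.
have [_ ->] := inv_diag hd; have [_ ->] := inv_diag hh.
rewrite !mulmx_diag !Bl_diag -big_split /= -sumrB; apply: ler_sum => j _; rewrite !mxE.
exact: sc.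
Qed.


Lemma posdefP a (M : 'M[R]_a) : M^T = M -> (forall x, x != 0 -> 0 < Q M x) -> posdef M.
Proof. by move=> h1 h2; split. Qed.
Lemma posdefQ a (M : 'M[R]_a) x : posdef M -> x != 0 -> 0 < Q M x.
Proof. by case=> _ h; apply: h. Qed.

Lemma sym_blk a b (A : 'M[R]_a) (M : 'M[R]_(a,b)) Dm : A^T = A -> Dm^T = Dm ->
  (block_mx A M M^T Dm)^T = block_mx A M M^T Dm.
Proof. by move=> h1 h2; rewrite tr_block_mx h1 h2 trmxK. Qed.
Lemma sym_blk0 a b (A : 'M[R]_a) (Dm : 'M[R]_b) : A^T = A -> Dm^T = Dm ->
  (block_mx A 0 0 Dm)^T = block_mx A 0 0 Dm.
Proof. by move=> h1 h2; rewrite tr_block_mx h1 h2 !trmx0. Qed.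
Lemma symXMX a b (X : 'M[R]_(a,b)) M : M^T = M -> (X^T *m M *m X)^T = X^T *m M *m X.
Proof. by move=> h; rewrite !trmx_mul trmxK h mulmxA. Qed.
Lemma Lop_sym n p (L bL : 'M[R]_(n,p)) D bD : D^T = D -> bD^T = bD ->
  (Lop L D bL bD)^T = Lop L D bL bD.
Proof.
move=> hD hbD; rewrite /Lop raddfB raddfD /= !trmx_mul !trmxK trmx_inv hD hbD !mulmxA.
by rewrite [_ + (L^T *m _ *m _)]addrC.
Qed.

Lemma BlXY a b c (X : 'M[R]_(c,a)) (Y : 'M[R]_(c,b)) u v : Bl u (X^T *m Y) v = dot (X *m u) (Y *m v).
Proof. by rewrite /Bl /dot trmx_mul !mulmxA. Qed.

Lemma Q0 a (M : 'M[R]_a) : Q M 0 = 0.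
Proof. by rewrite /Q /Bl mulmx0 mxE. Qed.
Lemma dot0 a : dot (0 : 'cV[R]_a) 0 = 0.
Proof. by rewrite /dot mulmx0 mxE. Qed.
Lemma dot_ge0 a (e : 'cV[R]_a) : 0 <= dot e e.
Proof. by have := Q_ge0 e (diagpos1 a); rewrite /Q BlE mul1mx. Qed.
Lemma dot_gt0 a (e : 'cV[R]_a) : e != 0 -> 0 < dot e e.
Proof. by move=> he; have := Q_gt0 (diagpos1 a) he; rewrite /Q BlE mul1mx. Qed.

Lemma G1 n1 n2 (C : 'M[R]_(n1,1)) (Kk : 'M[R]_(n1,n2)) y1 x4 x6 :
  Q 1%:M y1 + 2 * Bl y1 (-C) x4 + 2 * Bl y1 Kk x6 =
  dot (y1 - (C *m x4 - Kk *m x6)) (y1 - (C *m x4 - Kk *m x6))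
  - Q (C^T *m invmx 1%:M *m C) x4 + 2 * Bl x4 (C^T *m Kk) x6
  - Q (Kk^T *m invmx 1%:M *m Kk) x6.
Proof.
rewrite invmx1 !mulmx1 /Q !BlXY BlN /Q !BlE mul1mx.
set g := C *m x4; set k := Kk *m x6.
rewrite !dotBl !dotBr (dotC g y1) (dotC k y1) (dotC k g); lra.
Qed.

Lemma G2 n (Dh : 'M[R]_n) (bb : 'cV[R]_n) y2 (x4 : 'cV[R]_1) : Dh^T = Dh -> Dh \in unitmx ->
  Q Dh y2 + 2 * Bl y2 bb x4 =
  Q Dh (y2 + invmx Dh *m (bb *m x4)) - Q (bb^T *m invmx Dh *m bb) x4.
Proof.
move=> hs hu.
have e3 : Q (bb^T *m invmx Dh *m bb) x4 = dot (bb *m x4) (invmx Dh *m (bb *m x4)).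
  by rewrite /Q -mulmxA BlXY mulmxA.
set c := bb *m x4 in e3 *; set w := invmx Dh *m c in e3 *.
have e1 : dot w (Dh *m y2) = dot c y2 by rewrite -BlE BlE' hs /w mulKVmx.
have e2 : Dh *m w = c by rewrite /w mulKVmx.
rewrite e3 /Q !BlE mulmxDr !dotDl !dotDr e1 e2 (dotC c y2) (dotC w c) /c; lra.
Qed.

End H.
Lemma posdef_ge0 (R : realFieldType) a (M : 'M[R]_a) x : posdef M -> 0 <= Q M x.
Proof.
move=> h; case: (eqVneq x 0) => [->|hx]; first by rewrite Q0.
exact/ltW/(posdefQ h hx).
Qed.

Unset Implicit Arguments.

Theorem theorem3 (R : realFieldType) (nx nu m mw : nat)
    (P : 'M[R]_(m, nx)) (F : 'M[R]_(mw, nx)) (i : 'I_m)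
    (A : 'M[R]_nx) (B : 'M[R]_(nx, nu)) (K : 'M[R]_(nu, nx))
    (b : 'cV[R]_m) (d : 'cV[R]_mw) (D : 'M[R]_m) (W : 'M[R]_mw) :
  diagpos D -> diagpos W -> RPI P F i A B K b d D W ->
  LMI3 P F i B K D W A B d K b (invmx D) (invmx W) /\
  (forall (bA : 'M[R]_nx) (bB : 'M[R]_(nx, nu)) (bd : 'cV[R]_mw)
          (bK : 'M[R]_(nu, nx)) (bb : 'cV[R]_m) (Dh : 'M[R]_m) (Wh : 'M[R]_mw),
     diagpos Dh -> diagpos Wh ->
     LMI3 P F i B K D W bA bB bd bK bb Dh Wh ->
     RPI P F i bA bB bK bb bd (invmx Dh) (invmx Wh)).
Proof.
move=> hD hW hR; split; last first.
  move=> bA bB bd bK bb Dh Wh hDh hWh hL.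
  rewrite /RPI /LMI3 in hL *; cbv zeta in hL |- *.
  apply: posdefP.
    apply: sym_blk; first exact: tr11.
    by apply: sym_blk0; apply: symXMX; apply: diagpos_sym; apply: diagpos_inv.
  move=> x; rewrite -(vsubmxK x); move: (usubmx x) (dsubmx x) => x4 x56.
  rewrite -(vsubmxK x56); move: (usubmx x56) (dsubmx x56) => x5 x6 hx.
  set y1 := bB^T *m (row i P)^T *m x4 - bK *m x6.
  set y2 := - (invmx Dh *m (bb *m x4)).
  set y3 := - (invmx Wh *m (bd *m x4)).
  have hy : col_mx y1 (col_mx y2 (col_mx y3 (col_mx x4 (col_mx x5 x6)))) != 0.
    by move: hx; rewrite !col_mx_eq0; apply: contra => /and4P [_ _ _].
  have hpos := posdefQ hL hy.
  rewrite ?(QB0, QB, Bl_row, Bl0) in hpos.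
  rewrite ?(QB0, QB, Bl_row, Bl0).
  rewrite (QD (2 * bb i 0)%:M) (QD (Lop P _ _ _)) in hpos.
  rewrite (QBm ((2 * bb i 0)%:M - _)) (QBm (2 * bb i 0)%:M) mulmxDr BlD mulmxA.
  have f1 := G1 (bB^T *m (row i P)^T) bK y1 x4 x6.
  rewrite subrr dot0 in f1.
  have eK : (bB^T *m (row i P)^T)^T *m bK = row i P *m bB *m bK by rewrite trmx_mul !trmxK.
  rewrite eK in f1.
  have f2 := G2 bb y2 x4 (diagpos_sym hDh) (diagpos_unit hDh).
  rewrite addNr Q0 in f2.
  have f3 := G2 bd y3 x4 (diagpos_sym hWh) (diagpos_unit hWh).
  rewrite addNr Q0 in f3.
  have l1 := Lop_le (B^T *m (row i P)^T) (bB^T *m (row i P)^T) x4 (diagpos1 R nu) (diagpos1 R nu).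
  have l2 := Lop_le F F x5 (diagpos_inv hW) hWh.
  have l3 := Lop_le P P x6 (diagpos_inv hD) hDh.
  have l4 := Lop_le K bK x6 (diagpos1 R nu) (diagpos1 R nu).
  lra.
have hDi := diagpos_inv hD; have hWi := diagpos_inv hW.
rewrite /RPI in hR; rewrite /LMI3; cbv zeta in hR |- *.
apply: posdefP.
  apply: sym_blk; first exact: trmx1.
  apply: sym_blk; first exact: diagpos_sym.
  apply: sym_blk; first exact: diagpos_sym.
  apply: sym_blk; first exact: tr11.
  apply: sym_blk0; first by apply: Lop_sym; apply: diagpos_sym.
  by rewrite raddfD /= !Lop_sym ?trmx1 //; apply: diagpos_sym.
move=> y; rewrite -(vsubmxK y); move: (usubmx y) (dsubmx y) => y1 z1.
rewrite -(vsubmxK z1); move: (usubmx z1) (dsubmx z1) => y2 z2.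
rewrite -(vsubmxK z2); move: (usubmx z2) (dsubmx z2) => y3 x.
rewrite -(vsubmxK x); move: (usubmx x) (dsubmx x) => x4 x56.
rewrite -(vsubmxK x56); move: (usubmx x56) (dsubmx x56) => x5 x6 hy.
have hr0 := posdef_ge0 (col_mx x4 (col_mx x5 x6)) hR.
have hr1 := @posdefQ _ _ _ (col_mx x4 (col_mx x5 x6)) hR.
rewrite ?(QB0, QB, Bl_row, Bl0) in hr0 hr1 |- *.
rewrite (QBm ((2 * b i 0)%:M - _)) (QBm (2 * b i 0)%:M) mulmxDr BlD mulmxA in hr0 hr1.
rewrite (QD (2 * b i 0)%:M) (QD (Lop P _ _ _)) !Lop_eq ?invmxK.
all: try exact: diagpos_unit.
2,3: exact: (diagpos_unit (diagpos1 _ _)).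
have f1 := G1 (B^T *m (row i P)^T) K y1 x4 x6.
have eK : (B^T *m (row i P)^T)^T *m K = row i P *m B *m K by rewrite trmx_mul !trmxK.
rewrite eK in f1.
have f2 := G2 b y2 x4 (diagpos_sym hDi) (diagpos_unit hDi).
have f3 := G2 d y3 x4 (diagpos_sym hWi) (diagpos_unit hWi).
rewrite !invmxK in f2 f3.
case: (eqVneq (col_mx x4 (col_mx x5 x6)) 0) => hx; last first.
  have := hr1 hx.
  have := dot_ge0 (y1 - (B^T *m (row i P)^T *m x4 - K *m x6)).
  have := Q_ge0 (y2 + D *m (b *m x4)) hDi.
  have := Q_ge0 (y3 + W *m (d *m x4)) hWi.
  lra.
move/eqP: hx; rewrite !col_mx_eq0 => /and3P [/eqP h4 /eqP h5 /eqP h6].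
have E1 : y1 - (B^T *m (row i P)^T *m x4 - K *m x6) = y1 by rewrite h4 h6 !mulmx0 subrr subr0.
have E2 : y2 + D *m (b *m x4) = y2 by rewrite h4 !mulmx0 addr0.
have E3 : y3 + W *m (d *m x4) = y3 by rewrite h4 !mulmx0 addr0.
rewrite E1 in f1; rewrite E2 in f2; rewrite E3 in f3.
have : 0 < dot y1 y1 + Q (invmx D) y2 + Q (invmx W) y3.
  move: hy; rewrite h4 h5 h6 !col_mx0 !col_mx_eq0 eqxx andbT => h.
  have g1 := dot_ge0 y1; have g2 := Q_ge0 y2 hDi; have g3 := Q_ge0 y3 hWi.
  case: (eqVneq y1 0) => n1; last by have := dot_gt0 n1; lra.
  case: (eqVneq y2 0) => n2; last by have := Q_gt0 hDi n2; lra.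
  case: (eqVneq y3 0) => n3; last by have := Q_gt0 hWi n3; lra.
  by rewrite n1 n2 n3 !eqxx in h.
lra.
Qed.
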